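(* Let $\Sigma$ be a graded alphabet, $t\in T_\Sigma$, and $A_t=(\Sigma,Q,\nu,\delta)$ the subtree automaton of $t$. Then for every state $r\in Q$, the down language satisfies $L_r(A_t)=\{\mathrm{h}(r)\}$.
   Context: A graded alphabet is a finite set $\Sigma=\bigcup_{k\in\mathbb{N}}\Sigma_k$; $T_\Sigma$ is the set of trees $f(t_1,\ldots,t_k)$ with $f\in\Sigma_k$. A RWTA is $A=(\Sigma,Q,\nu,\delta)$ with $Q$ finite, $\nu:Q\to\mathbb{N}$, $\delta\subseteq\bigcup_k Q\times\Sigma_k\times Q^k$; $\delta(f,q_1,\ldots,q_k)=\{q\mid(q,f,q_1,\ldots,q_k)\in\delta\}$, extended to subsets by union over tuples; $\Delta(f(t_1,\ldots,t_k))=\delta(f,\Delta(t_1),\ldots,\Delta(t_k))$. The down language of a state $q$ is $L_q(A)=\{s\in T_\Sigma\mid q\in\Delta(s)\}$. For $t=f(t_1,\ldots,t_k)$, $\mathrm{SubTree}(t)=\{t\}\cup\bigcup_j\mathrm{SubTree}(t_j)$. The tree $t^\sharp$ is obtained from $t$ by indexing each symbol occurrence with its position in a preorder traversal (indexed symbols are distinct and keep their arity); $\Sigma_{t^\sharp}$ is the set of indexed symbols of $t^\sharp$; $\mathrm{h}$ erases indices. The subtree automaton of $t$ is $A_t=(\Sigma,Q,\nu,\delta)$ with $Q=\mathrm{SubTree}(t^\sharp)$, $\nu\equiv1$, and for $f\in\Sigma_{t^\sharp}$ of arity $k$ and $t_1,\ldots,t_{k+1}\in Q$: $t_{k+1}\in\delta(\mathrm{h}(f),t_1,\ldots,t_k)$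 iff $t_{k+1}=f(t_1,\ldots,t_k)$. *)

(* Defs.v *)
From mathcomp Require Import all_boot.
From Stdlib Require List.

Set Implicit Arguments.
Unset Strict Implicit.
Unset Printing Implicit Defensive.

(* Unranked trees over labels of type L; a graded alphabet is a finite type
   [S] with an arity function [ar : S -> nat], and T_Sigma is the set of
   trees [t] with [wf ar t] (every node f has exactly [ar f] children). *)
Inductive tree (L : Type) : Type := Node : L -> seq (tree L) -> tree L.
Arguments Node {L} _ _.

Section Trees.
Variable L : Type.

Fixpoint wf (ar : L -> nat) (t : tree L) : bool :=
  match t with Node f ts => (size ts == ar f) && all (wf ar) ts end.

Fixpoint subtrees (t : tree L) : seq (tree L) :=
  match t with Node f ts => t :: flatten (map subtrees ts) end.

Fixpoint labels (t : tree L) : seq L :=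
  match t with Node f ts => f :: flatten (map labels ts) end.

Fixpoint tmap (L' : Type) (g : L -> L') (t : tree L) : tree L' :=
  match t with Node f ts => Node (g f) (map (tmap g) ts) end.

(* t^sharp: each symbol occurrence is paired with its position (starting at 0)
   in a preorder traversal.  [sharp_from n t] indexes starting from [n] and
   returns the next unused index. *)
Fixpoint sharp_from (n : nat) (t : tree L) : tree (L * nat) * nat :=
  match t with
  | Node f ts =>
      let fix go (m : nat) (us : seq (tree L)) : seq (tree (L * nat)) * nat :=
        match us with
        | [::] => ([::], m)
        | u :: us' =>
            let (u', m1) := sharp_from m u in
            let (us'', m2) := go m1 us' in (u' :: us'', m2)
        end in
      let (ts', m) := go n.+1 ts in (Node (f, n) ts', m)
  end.

Definition sharp (t : tree L) : tree (L * nat) := (sharp_from 0 t).1.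

End Trees.

Definition herase (L : Type) (t : tree (L * nat)) : tree L := tmap fst t.

(* The subtree automaton A_t.  States are the elements of SubTree(t^sharp)
   (indexed trees); nu is constantly 1 (irrelevant for down languages).
   An indexed symbol f' = (f, i) has the arity of f. *)
Section SubtreeAutomaton.
Variables (S : finType) (ar : S -> nat) (t : tree S).

Definition state := tree (S * nat).

Definition is_state (q : state) : Prop := List.In q (subtrees (sharp t)).

Definition delta (f : S) (qs : seq state) (q : state) : Prop :=
  exists f' : S * nat,
    [/\ List.In f' (labels (sharp t)), f'.1 = f, size qs = ar f,
        (forall q', List.In q' qs -> is_state q') & is_state q]
    /\ q = Node f' qs.

Inductive Delta : tree S -> state -> Prop :=
  | DeltaNode (f : S) (ss : seq (tree S)) (qs : seq state) (q : state) :
      List.Forall2 Delta ss qs -> delta f qs q -> Delta (Node f ss) q.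

Definition down_lang (q : state) (s : tree S) : Prop := wf ar s /\ Delta s q.

End SubtreeAutomaton.

(* Main.v *)
Require Import Defs.
From mathcomp Require Import all_boot.
From Stdlib Require List.

Section Aux.
Variable L : Type.

Definition tree_ind' (P : tree L -> Prop)
  (H : forall f ts, (forall u, List.In u ts -> P u) -> P (Node f ts)) :
  forall t, P t :=
  fix F t := match t with
  | Node f ts => H f ts
      ((fix G (us : seq (tree L)) : forall u, List.In u us -> P u :=
          match us with
          | [::] => fun u (hu : List.In u [::]) => False_ind _ hu
          | v :: vs => fun u hu =>
              match hu with
              | or_introl e => eq_ind v P (F v) u e
              | or_intror h => G vs u h
              end
          end) ts)
  end.

Lemma in_flatten_map (A B : Type) (g : A -> seq B) x (ts : seq A) :
  List.In x (flatten (map g ts)) <-> exists u, List.In u ts /\ List.In x (g u).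
Proof.
elim: ts => [|a ts IH] /=; first by split => // [[u []]].
rewrite List.in_app_iff IH; split.
- case=> [h|[u [hu hx]]]; [by exists a; auto | by exists u; auto].
- case=> u [[<-|hu] hx]; [by left | by right; exists u].
Qed.

Lemma sub_trans (T r q : tree L) :
  List.In r (subtrees T) -> List.In q (subtrees r) -> List.In q (subtrees T).
Proof.
elim/tree_ind': T r => f ts IH r /= [<-|] //.
move=> /in_flatten_map [u [hu hr]] hq; right.
apply/in_flatten_map; exists u; split => //; exact: IH hr hq.
Qed.

Lemma sub_labels (T : tree L) f qs :
  List.In (Node f qs) (subtrees T) -> List.In f (labels T).
Proof.
elim/tree_ind': T => g ts IH /= [[-> _]|]; first by left.
move=> /in_flatten_map [u [hu hr]]; right.
apply/in_flatten_map; exists u; split => //; exact: IH hr.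
Qed.


Lemma all_In (A : Type) (p : pred A) (ts : seq A) u :
  all p ts -> List.In u ts -> p u.
Proof.
elim: ts => [|a ts IH] //= /andP [pa pts] [<-|h] //; exact: IH.
Qed.

Lemma sub_wf (ar : L -> nat) (T r : tree L) :
  List.In r (subtrees T) -> wf ar T -> wf ar r.
Proof.
elim/tree_ind': T => g ts IH /= [<-|] //.
move=> /in_flatten_map [u [hu hr]] /andP [_ Ha].
apply: (IH u hu hr); exact: (@all_In _ (wf ar) ts u Ha hu).
Qed.

End Aux.
Arguments sub_trans {L}.
Arguments sub_labels {L}.
Arguments sub_wf {L}.

Section Go.
Variable S : Type.
Fixpoint go' (n : nat) (us : seq (tree S)) : seq (tree (S * nat)) * nat :=
  match us with
  | [::] => ([::], n)
  | u :: us' =>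
      let (u', m1) := sharp_from n u in
      let (us'', m2) := go' m1 us' in (u' :: us'', m2)
  end.

End Go.
Arguments go' {S}.

Lemma sharp_Node (S : Type) n f (ts : seq (tree S)) :
  sharp_from n (Node f ts) = let (ts', m) := go' n.+1 ts in (Node (f, n) ts', m).
Proof. reflexivity. Qed.

Lemma tmap_sharp (S : Type) (t : tree S) : forall n, tmap fst (sharp_from n t).1 = t.
Proof.
elim/tree_ind': t => f ts IH n.
rewrite sharp_Node.
have : forall m, map (tmap fst) (go' m ts).1 = ts.
  elim: ts IH => [|u us IHu] IH m //=.
  case E: (sharp_from m u) => [u' m1]; case E2: (go' m1 us) => [us'' m2] /=.
  have := IH u (or_introl erefl) m; rewrite E /= => ->.
  have := IHu (fun v hv => IH v (or_intror hv)) m1; rewrite E2 /= => -> //.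
move=> H; case E: (go' n.+1 ts) => [ts' m] /=.
by have := H n.+1; rewrite E /= => ->.
Qed.

Lemma wf_tmap (S : Type) (ar : S -> nat) (u : tree (S * nat)) :
  wf (fun p => ar p.1) u = wf ar (tmap fst u).
Proof.
elim/tree_ind': u => f ts IH /=; rewrite size_map; congr (_ && _).
elim: ts IH => [|a ts IHt] IH //=; rewrite all_map /= IH; last by left.
congr (_ && _); rewrite -all_map; apply: IHt => v hv; apply: IH; by right.
Qed.

Theorem corollary3 (S : finType) (ar : S -> nat) (t : tree S) (Ht : wf ar t)
  (r : tree (S * nat)) (Hr : is_state t r) :
  forall s : tree S, down_lang ar t r s <-> s = herase r.
Proof.
have wfT : wf (fun p => ar p.1) (sharp t) by rewrite wf_tmap /sharp tmap_sharp.
move=> s; split.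
- case=> _ D; elim/tree_ind': s r D {Hr} => f ss IH r D.
  inversion D as [f0 ss0 qs q F2 dl]; subst.
  case: dl => f' [[_ <- _ _ _] ->].
  rewrite /herase /=; congr Node.
  elim: F2 IH => [|x y l l' Dxy F2 IHF] IH //=.
  rewrite (IH x (or_introl erefl) y Dxy); congr cons.
  apply: IHF => u hu; apply: IH; by right.
- move=> ->; split.
  + by rewrite -wf_tmap; apply: @sub_wf _ _ _ _ Hr wfT.
  + elim/tree_ind': r Hr => f' qs IH Hr.
    have Hch : forall q, List.In q qs -> is_state t q.
      move=> q hq; apply: sub_trans Hr _ => /=; right.
      apply/in_flatten_map; exists q; split => //.
      by case: q {hq} => ? ?; left.
    change (Delta ar t (Node f'.1 (map (@herase S) qs)) (Node f' qs)).
    apply: (@DeltaNode _ _ _ f'.1 (map (@herase S) qs) qs).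
      clear Hr; elim: qs IH Hch => [|q qs IHq] IH Hch /=; first by constructor.
      constructor; first by apply: IH; [left | apply: Hch; left].
      apply: IHq => [u hu hs|u hu]; [by apply: IH => //; right | by apply: Hch; right].
    exists f'; split => //; split => //.
    * exact: sub_labels Hr.
    * have := @sub_wf _ _ _ _ Hr wfT => /= /andP [/eqP -> _] //.
Qed.
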